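(* Let $\boldsymbol t=(\boldsymbol u,\boldsymbol v)$ and suppose that $\widehat{\boldsymbol \theta}$ in step (S1) exists. Then $\mu_u(\widehat{\boldsymbol \theta})=\boldsymbol u\in M_u$, and in step (S2) we get that $\theta_v(\check{\boldsymbol \mu})=\widehat{\boldsymbol \theta}_v$. In particular, after steps (S1) and (S2), the optimum $\check{\boldsymbol \mu}$ represents an element of the mixed convex family $\mathcal{E}'$.
   Context: Let $\mathcal{E}=\{P_{\boldsymbol\theta}:\boldsymbol\theta\in\Theta\}$ be a minimally represented regular exponential family with densities $p(\boldsymbol x;\boldsymbol\theta)=\exp\{\langle\boldsymbol\theta,\boldsymbol t(\boldsymbol x)\rangle-A(\boldsymbol\theta)\}$, open canonical parameter space $\Theta\subseteq\mathbb{R}^k$, mean parameter $\boldsymbol\mu=\mu(\boldsymbol\theta)=\nabla A(\boldsymbol\theta)$ ranging over $M$ (interior of the convex hull of $\boldsymbol t(\mathcal X)$), with inverse map $\theta(\boldsymbol\mu)$. Split the sufficient statistic $\boldsymbol t=(\boldsymbol u,\boldsymbol v)$ and correspondingly $\boldsymbol\theta=(\boldsymbol\theta_u,\boldsymbol\theta_v)$, $\boldsymbol\mu=(\boldsymbol\mu_u,\boldsymbol\mu_v)$; write $\mu_u(\boldsymbol\theta)$, $\theta_v(\boldsymbol\mu)$ for the corresponding components of the maps. The mixed parameter $(\boldsymbol\mu_u,\boldsymbol\theta_v)$ ranges over $M_u\times\Theta_v$ (projections of $M$ and $\Theta$). The mixed convex family $\mathcal{E}'$ consists of all distributions with mixed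 parameters in $M_u'\times\Theta_v'$, where $M_u'\subseteq M_u$, $\Theta_v'\subseteq\Theta_v$ are convex and relatively closed. Let $C_u=\{\boldsymbol\mu\in M:\boldsymbol\mu_u\in M_u'\}$ and $C_v=\{\boldsymbol\theta\in\Theta:\boldsymbol\theta_v\in\Theta_v'\}$. The Kullback–Leibler divergence is $\boldsymbol K(\boldsymbol\mu_1,\boldsymbol\theta_2)=-\langle\boldsymbol\mu_1,\boldsymbol\theta_2\rangle+A^*(\boldsymbol\mu_1)+A(\boldsymbol\theta_2)$, with $A^*$ the Fenchel conjugate of $A$; it is strictly convex in each argument. Given data with average sufficient statistic $\boldsymbol t$: step (S1) minimizes $\boldsymbol K(\boldsymbol t,\boldsymbol\theta)$ over $\boldsymbol\theta\in C_v$, with (unique, if existing) optimum $\widehat{\boldsymbol\theta}$; step (S2) minimizes $\boldsymbol K(\boldsymbol\mu,\widehat{\boldsymbol\theta})$ over $\boldsymbol\mu\in C_u$, with unique optimum $\check{\boldsymbol\mu}$ (the mixed dual estimator). *)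

(* Defs.v *)
From HB Require Import structures.
From mathcomp Require Import all_boot all_order all_algebra.
From mathcomp Require Import all_classical all_reals all_analysis.
Set Implicit Arguments. Unset Strict Implicit. Unset Printing Implicit Defensive.
Import Order.TTheory GRing.Theory Num.Theory.
Import numFieldNormedType.Exports.
Local Open Scope classical_set_scope.
Local Open Scope ring_scope.

Definition dotv (R : realType) (n : nat) (x y : 'rV[R]_n) : R :=
  \sum_(i < n) x ord0 i * y ord0 i.

Definition grad (R : realType) (n : nat) (f : 'rV[R]_n -> R) (x : 'rV[R]_n)
  : 'rV[R]_n := \row_(i < n) ('d f x (delta_mx ord0 i : 'rV[R]_n)).

Definition upart (R : realType) (ku kv : nat) (x : 'rV[R]_(ku + kv)) : 'rV[R]_ku :=
  lsubmx x.
Definition vpart (R : realType) (ku kv : nat) (x : 'rV[R]_(ku + kv)) : 'rV[R]_kv :=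
  rsubmx x.

Definition strictly_convex_on (R : realType) (n : nat) (S : set 'rV[R]_n)
  (f : 'rV[R]_n -> R) : Prop :=
  forall x y l, S x -> S y -> x <> y -> 0 < l -> l < 1 ->
    f (l *: x + (1 - l) *: y) < l * f x + (1 - l) * f y.

Definition rel_closed (T : topologicalType) (B S : set T) : Prop :=
  S `<=` B /\ exists C : set T, closed C /\ S = C `&` B.

Definition regular_minimal_logpartition (R : realType) (k : nat)
  (Theta : set 'rV[R]_k) (A : 'rV[R]_k -> R) : Prop :=
  [/\ open Theta, convex_set Theta,
      (forall th, Theta th -> differentiable A th),
      strictly_convex_on Theta A
    & open (grad A @` Theta)].

Definition meanspace (R : realType) (k : nat) (Theta : set 'rV[R]_k)
  (A : 'rV[R]_k -> R) : set 'rV[R]_k := grad A @` Theta.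

Definition theta_of (R : realType) (k : nat) (Theta : set 'rV[R]_k)
  (A : 'rV[R]_k -> R) (mu : 'rV[R]_k) : 'rV[R]_k :=
  xget 0 [set th | Theta th /\ grad A th = mu].

Definition conjA (R : realType) (k : nat) (Theta : set 'rV[R]_k)
  (A : 'rV[R]_k -> R) (mu : 'rV[R]_k) : R :=
  sup [set dotv mu th - A th | th in Theta].

Definition KL (R : realType) (k : nat) (Theta : set 'rV[R]_k)
  (A : 'rV[R]_k -> R) (mu1 th2 : 'rV[R]_k) : R :=
  - dotv mu1 th2 + conjA Theta A mu1 + A th2.

Definition is_argmin (T : Type) (R : realType) (f : T -> R) (S : set T) (x : T)
  : Prop := S x /\ forall y, S y -> f x <= f y.

Definition C_u (R : realType) (ku kv : nat) (Theta : set 'rV[R]_(ku + kv))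
  (A : 'rV[R]_(ku + kv) -> R) (Mu' : set 'rV[R]_ku) : set 'rV[R]_(ku + kv) :=
  [set mu | meanspace Theta A mu /\ Mu' (upart mu)].
Definition C_v (R : realType) (ku kv : nat) (Theta : set 'rV[R]_(ku + kv))
  (Thv' : set 'rV[R]_kv) : set 'rV[R]_(ku + kv) :=
  [set th | Theta th /\ Thv' (vpart th)].

(* mu (a mean parameter) represents an element of the mixed convex family E':
   its mixed parameter (mu_u, theta_v(mu)) lies in M'_u x Theta'_v. *)
Definition in_mixed_family (R : realType) (ku kv : nat)
  (Theta : set 'rV[R]_(ku + kv)) (A : 'rV[R]_(ku + kv) -> R)
  (Mu' : set 'rV[R]_ku) (Thv' : set 'rV[R]_kv) (mu : 'rV[R]_(ku + kv)) : Prop :=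
  [/\ meanspace Theta A mu, Mu' (upart mu) & Thv' (vpart (theta_of Theta A mu))].

Arguments upart {R ku kv} x.
Arguments vpart {R ku kv} x.
Arguments grad {R n} f x.

(* Main.v *)
Require Import Defs.
From HB Require Import structures.
From mathcomp Require Import all_boot all_order all_algebra.
From mathcomp Require Import all_classical all_reals all_analysis.
From mathcomp Require Import ring lra.
Import Order.TTheory GRing.Theory Num.Theory.
Import numFieldNormedType.Exports.
Local Open Scope classical_set_scope.
Local Open Scope ring_scope.


Section Helpers.
Variable R : realType.
Variable n : nat.
Implicit Types (x y v : 'rV[R]_n).

Lemma dquot (f : 'rV[R]_n -> R) x v : differentiable f x ->
  (fun h : R => h^-1 * (f (h *: v + x) - f x)) @ 0^' --> 'd f x v.
Proof.
move=> df; rewrite -deriveE //.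
have := @diff_derivable _ _ _ f x v df.
rewrite /derivable => /cvg_ex[L HL].
rewrite /derive.
have -> : (fun h : R => h^-1 * (f (h *: v + x) - f x)) =
   (fun h => h^-1 *: ((f \o shift x) (h *: v) - f x)) by [].
by rewrite (cvg_lim _ HL).
Qed.

Lemma RGE (g : R -> R) L a : g @ 0^' --> L ->
  (exists2 d, 0 < d & forall h, 0 < h < d -> a <= g h) -> a <= L.
Proof.
move=> gL [d d0 H].
have gL' := cvg_dnbhs_at_right gL.
rewrite -(cvg_lim _ gL') //.
apply: limr_ge; first by apply/cvg_ex; exists L.
near=> h; apply: H; apply/andP; split.
  by near: h; exact: nbhs_right_gt.
by near: h; exact: nbhs_right_lt.
Unshelve. all: by end_near.
Qed.

Lemma RLE (g : R -> R) L a : g @ 0^' --> L ->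
  (exists2 d, 0 < d & forall h, 0 < h < d -> g h <= a) -> L <= a.
Proof.
move=> gL [d d0 H].
rewrite -(opprK L) -(opprK a) lerN2.
apply: (@RGE (fun h => - g h)); first exact: cvgN.
by exists d => // h /H; rewrite lerN2.
Qed.



Lemma DIRGE (f : 'rV[R]_n -> R) x v a : differentiable f x ->
  (exists2 d, 0 < d & forall h, 0 < h < d -> h * a <= f (h *: v + x) - f x) ->
  a <= 'd f x v.
Proof.
move=> df [d d0 H]; have := @RGE _ _ a (@dquot f x v df); apply; exists d => // h hh.
have h0 : 0 < h by case/andP: hh.
by rewrite ler_pdivlMl // H.
Qed.

Lemma DIRLE (f : 'rV[R]_n -> R) x v a : differentiable f x ->
  (exists2 d, 0 < d & forall h, 0 < h < d -> f (h *: v + x) - f x <= h * a) ->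
  'd f x v <= a.
Proof.
move=> df [d d0 H]; have := @RLE _ _ a (@dquot f x v df); apply; exists d => // h hh.
have h0 : 0 < h by case/andP: hh.
by rewrite ler_pdivrMl // H.
Qed.

Lemma dotvDr x y z : dotv x (y + z) = dotv x y + dotv x z.
Proof. by rewrite /dotv -big_split; apply: eq_bigr => i _; rewrite mxE mulrDr. Qed.
Lemma dotvDl x y z : dotv (y + z) x = dotv y x + dotv z x.
Proof. by rewrite /dotv -big_split; apply: eq_bigr => i _; rewrite mxE mulrDl. Qed.
Lemma dotvZr x y a : dotv x (a *: y) = a * dotv x y.
Proof. by rewrite /dotv mulr_sumr; apply: eq_bigr => i _; rewrite mxE mulrCA. Qed.
Lemma dotvZl x y a : dotv (a *: y) x = a * dotv y x.
Proof. by rewrite /dotv mulr_sumr; apply: eq_bigr => i _; rewrite mxE mulrA. Qed.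
Lemma dotvNr x y : dotv x (- y) = - dotv x y.
Proof. by rewrite -scaleN1r dotvZr mulN1r. Qed.
Lemma dotvBr x y z : dotv x (y - z) = dotv x y - dotv x z.
Proof. by rewrite dotvDr dotvNr. Qed.
Lemma dotv_er x (j : 'I_n) : dotv x 'e_j = x 0 j.
Proof.
rewrite /dotv (bigD1 j) //= big1 ?addr0.
  by rewrite mxE !eqxx mulr1.
by move=> i ij; rewrite mxE (negbTE ij) andbF mulr0.
Qed.
Lemma dotv_el x (j : 'I_n) : dotv 'e_j x = x 0 j.
Proof.
rewrite /dotv (bigD1 j) //= big1 ?addr0.
  by rewrite mxE !eqxx mul1r.
by move=> i ij; rewrite mxE (negbTE ij) andbF mul0r.
Qed.

Lemma G1 (f : 'rV[R]_n -> R) x v : 'd f x v = dotv (grad f x) v.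
Proof.
rewrite {1}(row_sum_delta v) linear_sum /dotv; apply: eq_bigr => i _.
by rewrite linearZ /= mxE mulrC.
Qed.

Lemma cvx (Th : set 'rV[R]_n) (f : 'rV[R]_n -> R) x y l :
  strictly_convex_on Th f -> Th x -> Th y -> 0 <= l <= 1 ->
  f (l *: x + (1 - l) *: y) <= l * f x + (1 - l) * f y.
Proof.
move=> sc Tx Ty /andP[l0 l1].
have [->|lne0] := eqVneq l 0.
  by rewrite scale0r add0r subr0 scale1r mul0r add0r mul1r.
have [->|lne1] := eqVneq l 1.
  by rewrite subrr scale0r addr0 scale1r mul0r addr0 mul1r.
have [<-|xy] := eqVneq x y.
  by rewrite -scalerDl addrC subrK scale1r -mulrDl addrC subrK mul1r.
apply/ltW/sc => //; first exact/eqP.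
  by rewrite lt_neqAle eq_sym lne0.
by rewrite lt_neqAle lne1.
Qed.

End Helpers.


Section H2.
Variable R : realType.
Variable n : nat.
Implicit Types (x y v : 'rV[R]_n).

Lemma cvxset (S : set 'rV[R]_n) x y l : convex_set S -> S x -> S y ->
  0 <= l <= 1 -> S (l *: x + (1 - l) *: y).
Proof.
move=> cS Sx Sy /andP[l0 l1].
have := cS x y (Itv01 l0 l1); rewrite !inE; apply => //.
Qed.

Lemma GI (Th : set 'rV[R]_n) (f : 'rV[R]_n -> R) x y :
  (forall z, Th z -> differentiable f z) -> strictly_convex_on Th f ->
  Th x -> Th y -> f x + dotv (grad f x) (y - x) <= f y.
Proof.
move=> df sc Tx Ty.
rewrite -G1.
suff : 'd f x (y - x) <= f y - f x by lra.
apply: DIRLE; first exact: df.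
exists 1 => // h /andP[h0 h1].
have -> : h *: (y - x) + x = h *: y + (1 - h) *: x.
  by apply/rowP => i; rewrite !mxE; ring.
have hh : 0 <= h <= 1 by rewrite !ltW.
have := @cvx R n Th f y x h sc Ty Tx hh; lra.
Qed.


Lemma CONJ (Th : set 'rV[R]_n) (f : 'rV[R]_n -> R) th :
  (forall z, Th z -> differentiable f z) -> strictly_convex_on Th f ->
  Th th -> conjA Th f (grad f th) = dotv (grad f th) th - f th.
Proof.
move=> df sc Tth.
set mu := grad f th.
have ub : ubound [set dotv mu th' - f th' | th' in Th] (dotv mu th - f th).
  move=> _ [th' Th' <-].
  have := @GI Th f th th' df sc Tth Th'; rewrite dotvBr -/mu; lra.
apply/eqP; rewrite eq_le; apply/andP; split.
  by apply: ge_sup => //; exists (dotv mu th - f th); exists th.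
apply: (ub_le_sup (E := [set dotv mu th' - f th' | th' in Th])).
  by exists (dotv mu th - f th).
by exists th.
Qed.

Lemma Dpos (Th : set 'rV[R]_n) (f : 'rV[R]_n -> R) xs p :
  (forall z, Th z -> differentiable f z) -> strictly_convex_on Th f ->
  convex_set Th -> Th xs -> Th p -> p <> xs ->
  0 < f p - f xs - dotv (grad f xs) (p - xs).
Proof.
move=> df sc cT Txs Tp pxs.
set m := (1/2 : R) *: p + (1 - 1/2) *: xs.
have h12 : ((0:R) <= 1/2) && (1/2 <= (1:R)) by apply/andP; split; lra.
have Tm : Th m by apply: cvxset.
have st := sc p xs (1/2) Tp Txs pxs ltac:(lra) ltac:(lra).
have gi := @GI Th f xs m df sc Txs Tm.
move: gi.
have -> : m - xs = (1/2 : R) *: (p - xs).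
  by apply/rowP => i; rewrite !mxE; ring.
rewrite dotvZr; lra.
Qed.

Lemma OPENLINE (S : set 'rV[R]_n) x v : open S -> S x ->
  exists2 d, 0 < d & forall h : R, `|h| < d -> S (h *: v + x).
Proof.
move=> oS Sx.
have : nbhs x S by apply: open_nbhs_nbhs; split.
move=> /nbhs_ballP[e e0 H].
exists (e / (`|v| + 1)); first by rewrite divr_gt0 // ltr_wpDl.
move=> h hd; apply: H; rewrite -ball_normE /ball_ /=.
rewrite opprD addrCA subrr addr0 normrN normrZ.
have v1 : 0 < `|v| + 1 by rewrite ltr_wpDl.
rewrite ltr_pdivlMr // in hd.
apply: le_lt_trans hd.
by rewrite ler_wpM2l // lerDl.
Qed.

End H2.


Section H3.
Variable R : realType.
Variable n : nat.
Implicit Types (x y v : 'rV[R]_n).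

Lemma NORMCOORD x (j : 'I_n) : `|x 0 j| <= `|x|.
Proof.
rewrite [leRHS]/Num.norm /= mx_normrE; apply/bigmax_geP; right => /=.
by exists (ord0, j).
Qed.

Lemma sphere_closed (c : 'rV[R]_n) (r : R) : closed [set p | `|p - c| = r].
Proof.
have -> : [set p | `|p - c| = r] = (fun p => `|p - c|) @^-1` [set x | x = r].
  by [].
apply: (@preimage_closed _ _ (fun p : 'rV[R]_n => `|p - c|) [set x : R | x = r]); last exact: closed_eq.
move=> p _; apply: (@continuous_comp _ _ _ (fun q : 'rV[R]_n => q - c) (fun x : 'rV[R]_n => `|x|)); last exact: norm_continuous.
exact: (cvgB cvg_id (cvg_cst c)).
Qed.

Lemma sphere_compact (c : 'rV[R]_n) (r : R) : compact [set p | `|p - c| = r].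
Proof.
apply: bounded_closed_compact; last exact: sphere_closed.
rewrite /= /bounded_near; near=> M => p /= pr.
apply: (@le_trans _ _ (`|p - c| + `|c|)).
  by rewrite -{1}(subrK c p) ler_normD.
rewrite pr; near: M; apply: nbhs_pinfty_ge; exact: num_real.
Unshelve. all: by end_near.
Qed.

End H3.


Lemma P1 (R : realType) (ku kv : nat)
  (Theta : set 'rV[R]_(ku + kv)) (A : 'rV[R]_(ku + kv) -> R)
  (Thv' : set 'rV[R]_kv) (t thhat : 'rV[R]_(ku + kv)) :
  regular_minimal_logpartition Theta A ->
  is_argmin (fun th => KL Theta A t th) (C_v Theta Thv') thhat ->
  upart (grad A thhat) = upart t.
Proof.
case=> oT cT dA sc oM [[Tth Vth] mn].
apply/rowP => i; rewrite !mxE.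
set v : 'rV[R]_(ku + kv) := 'e_(lshift kv i).
have [d d0 Hd] := @OPENLINE R _ Theta thhat v oT Tth.
have key : forall h : R, `|h| < d -> h * t 0 (lshift kv i) <= A (h *: v + thhat) - A thhat.
  move=> h hd.
  have Ch : C_v Theta Thv' (h *: v + thhat).
    split; first exact: Hd.
    suff -> : vpart (h *: v + thhat) = vpart thhat by [].
    apply/rowP => j; rewrite !mxE eq_rlshift andbF mulr0 add0r.
    by [].
  have := mn _ Ch; rewrite /KL dotvDr dotvZr /v dotv_er; lra.
have dA' := dA _ Tth.
apply/eqP; rewrite eq_le; apply/andP; split; last first.
  apply: DIRGE => //; exists d => // h /andP[h0 hd]; apply: key.
  by rewrite gtr0_norm.
have : - t 0 (lshift kv i) <= 'd A thhat (- v).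
  apply: DIRGE => //; exists d => // h /andP[h0 hd].
  have := key (- h); rewrite normrN gtr0_norm // => /(_ hd).
  by rewrite scaleNr scalerN; lra.
rewrite linearN /=; lra.
Qed.


Lemma P3 (R : realType) (ku kv : nat)
  (Theta : set 'rV[R]_(ku + kv)) (A : 'rV[R]_(ku + kv) -> R)
  (Mu' : set 'rV[R]_ku) (thhat muchk ths : 'rV[R]_(ku + kv)) (j : 'I_kv) :
  regular_minimal_logpartition Theta A ->
  is_argmin (fun mu => KL Theta A mu thhat) (C_u Theta A Mu') muchk ->
  Theta ths -> grad A ths = muchk ->
  ths 0 (rshift ku j) = thhat 0 (rshift ku j).
Proof.
case=> oT cT dA sc oM [[Mm Um] mn] Tths gmu.
set J := rshift ku j.
set d : 'rV[R]_(ku + kv) := 'e_J.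
pose D p := A p - A ths - dotv muchk (p - ths).
have Dge0 : forall p, Theta p -> 0 <= D p.
  move=> p Tp; have := @GI _ _ Theta A ths p dA sc Tths Tp; rewrite gmu /D; lra.
have Dgt0 : forall p, Theta p -> p <> ths -> 0 < D p.
  by move=> p Tp pne; have := @Dpos _ _ Theta A ths p dA sc cT Tths Tp pne; rewrite gmu.
have [δ0 δ0p Hδ] := @OPENLINE R _ (meanspace Theta A) muchk d oM Mm.
have stepA : forall s, `|s| < δ0 -> exists2 q, Theta q &
    (D q <= s * q 0 J - s * thhat 0 J) /\ (D q <= s * q 0 J - s * ths 0 J).
  move=> s sd.
  have [q Tq gq] := Hδ s sd.
  exists q => //.
  have Cs : C_u Theta A Mu' (s *: d + muchk).
    split; first exact: Hδ s sd.
    suff -> : upart (s *: d + muchk) = upart muchk by [].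
    by apply/rowP => i; rewrite !mxE eq_lrshift andbF mulr0 add0r.
  have := mn _ Cs; rewrite /KL.
  rewrite -gq (@CONJ _ _ Theta A q dA sc Tq) gq.
  rewrite -gmu (@CONJ _ _ Theta A ths dA sc Tths) gmu.
  have g2 := @GI _ _ Theta A q ths dA sc Tq Tths.
  rewrite gq in g2.
  rewrite !dotvBr !dotvDl !dotvZl /d !dotv_el in g2 *.
  rewrite /D dotvBr; split; lra.
have [e0 e0p He0] : exists2 e, 0 < e & forall p, `|p - ths| < e -> Theta p.
  have : nbhs ths Theta by apply: open_nbhs_nbhs; split.
  move=> /nbhs_ballP[e e0 H]; exists e => // p hp; apply: H.
  by rewrite -ball_normE /ball_ /= distrC.
set c := ths 0 J - thhat 0 J.
have [c0|cne0] := eqVneq c 0.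
  by apply/eqP; rewrite -subr_eq0 -/c c0.
exfalso.
have cpos : 0 < `|c| by rewrite normr_gt0.
set r := Num.min (e0 / 2) `|c|.
have r0 : 0 < r by rewrite lt_min cpos andbT divr_gt0.
have rle : r <= `|c| by rewrite ge_min lexx orbT.
have rlt : r < e0 by rewrite /r gt_min; apply/orP; left; lra.
set S := [set p | `|p - ths| = r].
have ST : forall p, S p -> Theta p by move=> p Sp; apply: He0; rewrite Sp.
have dpos : 0 < `|d|.
  apply: (@lt_le_trans _ _ `|d 0 J|); last exact: NORMCOORD.
  by rewrite /d mxE !eqxx normr1.
have S0 : S !=set0.
  exists ((r / `|d|) *: d + ths); rewrite /S /= addrK normrZ ger0_norm.
    by rewrite divfK // gt_eqF.
  by rewrite divr_ge0 // ltW.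
have cS := @sphere_compact _ _ ths r.
have contD : {within S, continuous D}.
  apply: continuous_in_subspaceT => p; rewrite inE => Sp.
  have Tp := ST p Sp.
  have Hd : {for p, continuous (fun x : 'rV[R]_(ku + kv) => dotv muchk (x - ths))}.
    have -> : (fun x : 'rV[R]_(ku + kv) => dotv muchk (x - ths)) = 'd A ths \o (fun x : 'rV[R]_(ku + kv) => x - ths).
      by apply/funext => x /=; rewrite G1 gmu.
    apply: (@continuous_comp _ _ _ (fun x : 'rV[R]_(ku + kv) => x - ths) ('d A ths) p).
      exact: (cvgB cvg_id (cvg_cst ths)).
    have := diff_continuous (dA ths Tths); move=> /(_ (p - ths)); exact.
  exact: (cvgB (cvgB (differentiable_continuous (dA p Tp)) (cvg_cst (A ths))) Hd).
have [p0 Sp0 minp0] := EVT_min_rV S0 cS contD.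
rewrite inE in Sp0.
set m := D p0.
have m0 : 0 < m.
  apply: Dgt0; first exact: ST.
  move=> p0e; move: Sp0; rewrite /S /= p0e subrr normr0 => r0'.
  by move: r0; rewrite -r0' ltxx.
set η := Num.min (δ0 / 2) (m / (2 * r)).
have η0 : 0 < η by rewrite lt_min !divr_gt0 // mulr_gt0.
have ηδ : η < δ0 by rewrite /η gt_min; apply/orP; left; lra.
have ηr : η * r <= m / 2.
  have : η <= m / (2 * r) by rewrite ge_min lexx orbT.
  rewrite ler_pdivlMr ?mulr_gt0 // => H; lra.
set s := if 0 < c then - η else η.
have sabs : `|s| = η.
  by rewrite /s; case: ifP => _; rewrite ?normrN gtr0_norm.
have sc' : s * c = - (η * `|c|).
  rewrite /s; case: ifP => cp.
    by rewrite gtr0_norm // mulNr.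
  have cn : c < 0 by rewrite lt_neqAle cne0 /= leNgt cp.
  by rewrite ltr0_norm // mulrN opprK.
have sd : `|s| < δ0 by rewrite sabs.
have [q Tq [K1 K2]] := stepA s sd.
have Dq0 := Dge0 q Tq.
have scE : s * c = s * ths 0 J - s * thhat 0 J by rewrite /c mulrBr.
have qJ : η * `|c| <= s * q 0 J - s * ths 0 J by lra.
set w := q - ths.
have wJ : s * q 0 J - s * ths 0 J <= η * `|w|.
  have -> : s * q 0 J - s * ths 0 J = s * w 0 J by rewrite /w !mxE mulrBr.
  apply: (le_trans (ler_norm _)); rewrite normrM sabs; apply: ler_wpM2l; first exact: ltW.
  exact: NORMCOORD.
have cw : `|c| <= `|w|.
  by rewrite -(ler_pM2l η0); apply: (le_trans qJ).
have Npos : 0 < `|w| by apply: (lt_le_trans cpos).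
set N := `|w|.
set l := r / N.
have l0 : 0 < l by rewrite divr_gt0.
have l1 : l <= 1 by rewrite /l ler_pdivrMr // mul1r; apply: (le_trans rle).
have lN : l * N = r by rewrite /l divfK // gt_eqF.
set p := l *: q + (1 - l) *: ths.
have pE : p - ths = l *: w by apply/rowP => i; rewrite !mxE; ring.
have Sp : S p by rewrite /S /= pE normrZ gtr0_norm.
have Dp : D p <= l * D q.
  have hl : (0 <= l) && (l <= 1) by rewrite ltW.
  have := @cvx _ _ Theta A q ths l sc Tq Tths hl.
  rewrite /D pE dotvZr -/w mulrBr mulrBr mulrBl mul1r; lra.
have : m <= D p by apply: minp0; rewrite inE.
have : l * D q <= l * (η * N).
  apply: ler_wpM2l; first exact: ltW.
  rewrite /N; lra.
have -> : l * (η * N) = η * r by rewrite -lN; ring.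
lra.
Qed.


Theorem theorem4p5 (R : realType) (ku kv : nat)
  (Theta : set 'rV[R]_(ku + kv)) (A : 'rV[R]_(ku + kv) -> R)
  (Mu' : set 'rV[R]_ku) (Thv' : set 'rV[R]_kv)
  (t thhat muchk : 'rV[R]_(ku + kv)) :
  regular_minimal_logpartition Theta A ->
  Mu' `<=` upart @` meanspace Theta A -> convex_set Mu' ->
  rel_closed (upart @` meanspace Theta A) Mu' ->
  Thv' `<=` vpart @` Theta -> convex_set Thv' ->
  rel_closed (vpart @` Theta) Thv' ->
  is_argmin (fun th => KL Theta A t th) (C_v Theta Thv') thhat ->
  is_argmin (fun mu => KL Theta A mu thhat) (C_u Theta A Mu') muchk ->
  [/\ upart (grad A thhat) = upart t,
      (upart @` meanspace Theta A) (upart t),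
      vpart (theta_of Theta A muchk) = vpart thhat
    & in_mixed_family Theta A Mu' Thv' muchk].
Proof.
move=> reg _ _ _ _ _ _ [S1 mn1] [S2 mn2].
have e1 := @P1 _ _ _ Theta A Thv' t thhat reg (conj S1 mn1).
have Mm := S2.1.
set ths := theta_of Theta A muchk.
have [Tths gths] : Theta ths /\ grad A ths = muchk.
  rewrite /ths /theta_of.
  have := @xgetPex _ 0 [set th | Theta th /\ grad A th = muchk]; apply.
  by case: Mm => x Tx gx; exists x.
have e3 : vpart ths = vpart thhat.
  apply/rowP => j; rewrite !mxE.
  exact: (@P3 _ _ _ Theta A Mu' thhat muchk ths j reg (conj S2 mn2) Tths gths).
split => //.
  exists (grad A thhat) => //; exists thhat => //; exact: S1.1.
split; [exact: S2.1 | exact: S2.2 | ].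
by rewrite -/ths e3; exact: S1.2.
Qed.
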